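(* Let $\mathbf x,\mathbf m\in\mathbb C^d$ with $\operatorname{supp}(\widehat{\mathbf x})\subseteq[\gamma]_0$ and $\operatorname{supp}(\mathbf m)\subseteq[\delta]_0$, let $N\in\mathbb R^{d\times d}$, and let $K,L$ divide $d$. Let $\widetilde Y=F_LY_{K,L}^TF_K^T$ and $\widetilde N=F_LN_{K,L}^TF_K^T$. Suppose $K=\delta-1+\kappa$ for some integer $2\le\kappa\le\delta$ and $L=\gamma-1+\xi$ for some integer $1\le\xi\le\gamma$. Then for $\alpha\in[L]_0$ and $\omega\in[K]_0$: (i) if $0\le\alpha\le\xi-1$ and $0\le\omega\le\kappa-1$, then $\widetilde Y_{\alpha,\omega}=\frac{KL}{d^3}\left(F_d(\widehat{\mathbf x}\circ S_{-\alpha}\overline{\widehat{\mathbf x}})\right)_\omega\left(F_d(\widehat{\mathbf m}\circ S_\alpha\overline{\widehat{\mathbf m}})\right)_\omega+\widetilde N_{\alpha,\omega}$; (ii) if $0\le\alpha\le\xi-1$ and $\delta\le\omega\le K-1$, then $\widetilde Y_{\alpha,\omega}=\frac{KL}{d^3}\left(F_d(\widehat{\mathbf x}\circ S_{-\alpha}\overline{\widehat{\mathbf x}})\right)_{\omega-K}\left(F_d(\widehat{\mathbf m}\circ S_\alpha\overline{\widehat{\mathbf m}})\right)_{\omega-K}+\widetilde N_{\alpha,\omega}$; (iii) if $\gamma\le\alpha\le L-1$ and $0\le\omega\le\kappa-1$, then $\widetilde Y_{\alpha,\omega}=\frac{KL}{d^3}\left(F_d(\widehat{\mathbf x}\circ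 S_{L-\alpha}\overline{\widehat{\mathbf x}})\right)_\omega\left(F_d(\widehat{\mathbf m}\circ S_{\alpha-L}\overline{\widehat{\mathbf m}})\right)_\omega+\widetilde N_{\alpha,\omega}$; (iv) if $\gamma\le\alpha\le L-1$ and $\delta\le\omega\le K-1$, then $\widetilde Y_{\alpha,\omega}=\frac{KL}{d^3}\left(F_d(\widehat{\mathbf x}\circ S_{L-\alpha}\overline{\widehat{\mathbf x}})\right)_{\omega-K}\left(F_d(\widehat{\mathbf m}\circ S_{\alpha-L}\overline{\widehat{\mathbf m}})\right)_{\omega-K}+\widetilde N_{\alpha,\omega}$.
   Context: Vectors in $\mathbb C^d$ are indexed by $[d]_0=\{0,1,\dots,d-1\}$, with all indices interpreted modulo $d$. $F_n$ denotes the $n\times n$ DFT matrix $(F_n)_{j,k}=e^{-2\pi i jk/n}$, and $\widehat{\mathbf x}=F_d\mathbf x$. The shift is $(S_\ell\mathbf x)_n=x_{n+\ell}$; $\circ$ is the entrywise product and $\overline{\mathbf x}$ the entrywise conjugate; $\operatorname{supp}(\mathbf x)=\{n:x_n\neq0\}$. Measurements: given $\mathbf x,\mathbf m\in\mathbb C^d$ and an arbitrary real noise matrix $N\in\mathbb R^{d\times d}$, $Y\in\mathbb R^{d\times d}$ has entries $Y_{k,\ell}=\left|\sum_{n=0}^{d-1}x_nm_{n-\ell}e^{-2\pi i nk/d}\right|^2+N_{k,\ell}$ for $k,\ell\in[d]_0$. For positive integers $K,L$ dividing $d$, $Y_{K,L}$ is the $K\times L$ matrix $(Y_{K,L})_{k,\ell}=Y_{kd/K,\ell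 d/L}$ and $N_{K,L}$ is defined analogously from $N$. $\widetilde Y$ has rows indexed by $[L]_0$ and columns by $[K]_0$. *)

(* Defs.v *)
From HB Require Import structures.
From mathcomp Require Import all_boot all_order all_algebra all_field.
Set Implicit Arguments. Unset Strict Implicit. Unset Printing Implicit Defensive.
Import Order.TTheory GRing.Theory Num.Theory.
Local Open Scope ring_scope.

(* e^{2 pi i / n}: n.-root (-1) is e^{i pi / n} (root of minimal argument). *)
Definition zeta (n : nat) : algC := (n.-root (-1)) ^+ 2.
Definition wroot (n : nat) : algC := (zeta n)^-1.

Definition Fmat (n : nat) : 'M[algC]_n := \matrix_(j < n, k < n) wroot n ^+ (j * k).

(* Vectors in C^d are functions 'I_d -> algC; indices are read modulo d. *)
Definition vat (d : nat) (x : 'I_d -> algC) (n : int) : algC :=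
  if @insub nat (fun i => i < d)%N _ (absz (n %% d%:Z)%Z) is Some i then x i else 0.

Definition mat_at (d : nat) (A : 'M[algC]_d) (i j : int) : algC :=
  vat (fun i' => vat (fun j' => A i' j') j) i.

Definition dftv (d : nat) (x : 'I_d -> algC) : 'I_d -> algC :=
  fun k => \sum_(j < d) Fmat d k j * x j.

Definition shiftv (d : nat) (l : int) (x : 'I_d -> algC) : 'I_d -> algC :=
  fun n => vat x (n%:Z + l).

Definition conjv (d : nat) (x : 'I_d -> algC) : 'I_d -> algC := fun n => (x n)^*.

Definition hadamard (d : nat) (x y : 'I_d -> algC) : 'I_d -> algC :=
  fun n => x n * y n.

Definition supp_in (d : nat) (x : 'I_d -> algC) (g : nat) : Prop :=
  forall n : 'I_d, (g <= n)%N -> x n = 0.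

Definition Ymat (d : nat) (x m : 'I_d -> algC) (N : 'M[algC]_d) : 'M[algC]_d :=
  \matrix_(k < d, l < d)
    (`| \sum_(n < d) x n * vat m (n%:Z - l%:Z) * wroot d ^+ (n * k) | ^+ 2 + N k l).

Definition subsample (d K L : nat) (A : 'M[algC]_d) : 'M[algC]_(K, L) :=
  \matrix_(k < K, l < L) mat_at A (k * (d %/ K))%N (l * (d %/ L))%N.

Definition tildemx (d K L : nat) (A : 'M[algC]_d) : 'M[algC]_(L, K) :=
  Fmat L *m (subsample K L A)^T *m (Fmat K)^T.

(* Main.v *)
Require Import Defs.
From HB Require Import structures.
From mathcomp Require Import all_boot all_order all_algebra all_field.
From mathcomp Require Import ring lra zify.
Import Order.TTheory GRing.Theory Num.Theory.
Local Open Scope ring_scope.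
Set Implicit Arguments. Unset Strict Implicit. Unset Printing Implicit Defensive.


Lemma ltR (x y : algR) : (x < y) = (algRval x < algRval y). Proof. by []. Qed.
Lemma leR (x y : algR) : (x <= y) = (algRval x <= algRval y). Proof. by []. Qed.

Lemma monoR (p q c s : algR) : c^+2 + s^+2 = 1 -> 0 < q -> 0 < s -> 0 < p*s + q*c -> p*c - q*s < p.
Proof. move=> h1 h2 h3 h4.
have c1 : c < 1 by nra.
have : 0 < (p*s + q*c) * (1 - c) by nra.
have : 0 < q * (1 - c) by nra.
nra. Qed.

Lemma crossR (p q c s : algR) : p^+2 + q^+2 = 1 -> c^+2 + s^+2 = 1 -> 0 <= q -> 0 < s -> q*c - p*s < 0 -> c < p.
Proof. move=> h1 h2 h3 h4 h5. rewrite ltNge; apply/negP=> h6.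
have [hp|hp] := lerP 0 p.
  have : q^+2 >= s^+2 by nra.
  have : q >= s by nra. nra.
have [hc|hc] := lerP 0 c.
  have : 0 <= q * c by apply: mulr_ge0.
  have : 0 < - p * s by apply: mulr_gt0; lra. nra.
have : q^+2 <= s^+2 by nra.
have : q <= s by nra. nra.
Qed.

Lemma geR (c s : algR) : c^+2 + s^+2 = 1 -> -1 <= c.
Proof. move=> h; nra. Qed.

Lemma mono_C (p q c s : algC) : p \is Num.real -> q \is Num.real -> c \is Num.real -> s \is Num.real ->
  c^+2 + s^+2 = 1 -> 0 < q -> 0 < s -> 0 < p*s + q*c -> p*c - q*s < p.
Proof.
move=> hp hq hc hs.
have -> : p = algRval (in_algR hp) by []. have -> : q = algRval (in_algR hq) by [].
have -> : c = algRval (in_algR hc) by []. have -> : s = algRval (in_algR hs) by [].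
rewrite -!rmorphXn -!rmorphM -!rmorphD -!rmorphB -(rmorph1 algRval) -(rmorph0 algRval) -!ltR.
move=> /val_inj; apply: monoR.
Qed.

Lemma cross_C (p q c s : algC) : p \is Num.real -> q \is Num.real -> c \is Num.real -> s \is Num.real ->
  p^+2 + q^+2 = 1 -> c^+2 + s^+2 = 1 -> 0 <= q -> 0 < s -> q*c - p*s < 0 -> c < p.
Proof.
move=> hp hq hc hs.
have -> : p = algRval (in_algR hp) by []. have -> : q = algRval (in_algR hq) by [].
have -> : c = algRval (in_algR hc) by []. have -> : s = algRval (in_algR hs) by [].
rewrite -!rmorphXn -!rmorphM -!rmorphD -!rmorphB -(rmorph1 algRval) -(rmorph0 algRval) -!ltR -leR.
move=> /val_inj h1 /val_inj h2 h3 h4 h5; exact: crossR h1 h2 h3 h4 h5.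
Qed.

Lemma ge_C (c s : algC) : c \is Num.real -> s \is Num.real -> c^+2 + s^+2 = 1 -> -1 <= c.
Proof.
move=> hc hs.
have -> : c = algRval (in_algR hc) by []. have -> : s = algRval (in_algR hs) by [].
rewrite -!rmorphXn -!rmorphD -(rmorph1 algRval) -(rmorphN1 algRval) -leR.
move=> /val_inj; apply: geR.
Qed.

Lemma unit_ReIm (x : algC) : `|x| = 1 -> 'Re x ^+ 2 + 'Im x ^+ 2 = 1.
Proof. by rewrite -normC2_Re_Im => ->; rewrite expr1n. Qed.

Lemma norm_pow1 (x : algC) n : (0 < n)%N -> x ^+ n = 1 \/ x ^+ n = -1 -> `|x| = 1.
Proof.
move=> n0 h; apply/eqP; rewrite -(pexpr_eq1 n0 (normr_ge0 x)) -normrX.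
by case: h => ->; rewrite ?normrN normr1.
Qed.

Lemma conj_unit (x : algC) : `|x| = 1 -> x * x^* = 1.
Proof. by rewrite -normCK => ->; rewrite expr1n. Qed.

Lemma monoC (a u : algC) : `|u| = 1 -> 0 < 'Im u -> 0 < 'Im a -> 0 < 'Im (a * u) ->
  'Re (a * u) < 'Re a.
Proof.
move=> u1 hu ha; rewrite ReM ImM (mulrC ('Re u)) => h.
apply: (@mono_C ('Re a) ('Im a) ('Re u) ('Im u)) => //; by rewrite ?Creal_Re ?Creal_Im ?unit_ReIm.
Qed.

Lemma crossC (x g : algC) : `|x| = 1 -> `|g| = 1 -> 0 <= 'Im x -> 0 < 'Im g ->
  'Im (x * g^*) < 0 -> 'Re g < 'Re x.
Proof.
move=> x1 g1 hx hg; rewrite ImM Re_conj Im_conj => h.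
apply: (@cross_C ('Re x) ('Im x) ('Re g) ('Im g)); rewrite ?Creal_Re ?Creal_Im ?unit_ReIm //.
by move: h; rewrite mulrN (mulrC ('Re g)) addrC.
Qed.

Lemma Re_ge (x : algC) : `|x| = 1 -> -1 <= 'Re x.
Proof. move=> x1; apply: (@ge_C _ ('Im x)); rewrite ?Creal_Re ?Creal_Im ?unit_ReIm //. Qed.

Lemma real_unit (x : algC) : `|x| = 1 -> 'Im x = 0 -> x = 1 \/ x = -1.
Proof.
move=> x1 hI.
have ex : x = 'Re x by rewrite {1}[x]Crect hI mulr0 addr0.
have := unit_ReIm x1; rewrite hI expr0n addr0 -ex => /eqP.
by rewrite sqrf_eq1 => /orP[/eqP->|/eqP->]; [left|right].
Qed.
Definition good n (u : algC) := u ^+ n = -1 /\ forall j, (0 < j < n)%N -> 0 < 'Im (u ^+ j).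

Lemma ImN (x : algC) : 'Im (- x) = - 'Im x. Proof. by rewrite raddfN. Qed.
Lemma ReN (x : algC) : 'Re (- x) = - 'Re x. Proof. by rewrite raddfN. Qed.
Lemma Im1 : 'Im (1:algC) = 0. Proof. by apply/Creal_ImP; rewrite rpred1. Qed.
Lemma Re1 : 'Re (1:algC) = 1. Proof. by apply/Creal_ReP; rewrite rpred1. Qed.

Lemma good_norm n u : (0 < n)%N -> good n u -> `|u| = 1.
Proof. by move=> n0 [h _]; apply: (norm_pow1 n0); right. Qed.

Lemma good_chain n u : good n u -> forall m, (0 < m < n)%N -> 'Re (u ^+ m) <= 'Re u.
Proof.
move=> gu; elim=> [//|m IH] /andP[_ mn].
have n0 : (0 < n)%N by lia.
case: m IH mn => [|m] IH mn; first by rewrite expr1.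
apply: le_trans (IH _); last by lia.
rewrite exprSr; apply/ltW; apply: monoC.
- exact: good_norm gu.
- by have := proj2 gu 1; rewrite expr1; apply; lia.
- by apply: (proj2 gu); lia.
- by rewrite -exprSr; apply: (proj2 gu); lia.
Qed.

Lemma neq_m1_1 : (-1 : algC) != 1.
Proof. by rewrite -subr_eq0 -opprD oppr_eq0 -(natrD _ 1 1) pnatr_eq0. Qed.

Lemma good_prim n u : (0 < n)%N -> good n u -> (2 * n)%N.-primitive_root u.
Proof.
move=> n0 [un hI].
have N0 : (0 < 2 * n)%N by lia.
have uN : u ^+ (2 * n) = 1 by rewrite mulnC exprM un sqrrN expr1n.
have [m pm mdvd] := prim_order_exists N0 uN.
have m0 : (0 < m)%N := prim_order_gt0 pm.
have um : u ^+ m = 1 := prim_expr_order pm.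
have mle : (m <= 2 * n)%N := dvdn_leq N0 mdvd.
suff -> : (2 * n)%N = m by [].
apply/eqP; rewrite eqn_leq mle andbT leqNgt; apply/negP => lt.
have [mn|nm] := ltnP m n.
  by have := hI m; rewrite m0 mn um Im1 ltxx => /(_ isT).
move: nm; rewrite leq_eqVlt => /orP[/eqP nm|nm].
  by move: um; rewrite -nm un => /eqP; rewrite (negbTE neq_m1_1).
have := hI (m - n)%N; rewrite (_ : (0 < m - n < n)%N = true); last by lia.
move=> /(_ isT).
have : u ^+ m = - u ^+ (m - n) by rewrite -{1}(subnK (ltnW nm)) exprD un mulrN1.
by rewrite um => /(congr1 (fun x => - x)); rewrite opprK => <-; rewrite ImN Im1 oppr0 ltxx.
Qed.

Lemma good_root n u : (0 < n)%N -> good n u -> u = n.-root (-1).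
Proof.
move=> n0 gu.
case: n n0 gu => [//|[|n]] _ gu.
  by rewrite root1C -(expr1 u); case: gu.
set N := n.+2.
have N0 : (0 < N)%N by [].
set r := N.-root (-1).
have rN : r ^+ N = -1 by rewrite /r rootCK.
have Ir : 0 <= 'Im r by apply: Im_rootC_ge0.
have u1 := good_norm N0 gu.
have r1 : `|r| = 1 by apply: (norm_pow1 N0); right.
have Iu : 0 < 'Im u by have := proj2 gu 1; rewrite expr1; apply.
have pu := good_prim N0 gu.
have r2 : r ^+ (2 * N) = 1 by rewrite mulnC exprM rN sqrrN expr1n.
have [[i ilt] ri] := prim_rootP pu r2; rewrite /= in ri.
have Rle : 'Re u <= 'Re r by apply: rootC_Re_max => //; [case: gu | exact: ltW].
have Rge : 'Re r <= 'Re u.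
  have [iN|Ni|iN] := ltngtP i N.
  - case: i ilt ri iN => [|i] ilt ri iN.
      by move: rN; rewrite ri expr0 expr1n => /eqP; rewrite eq_sym (negbTE neq_m1_1).
    by rewrite ri; apply: (good_chain gu); lia.
  - exfalso.
    have : u ^+ i = - u ^+ (i - N) by rewrite -{1}(subnK (ltnW Ni)) exprD (proj1 gu) mulrN1.
    move=> ui; have h : 0 < 'Im (u ^+ (i - N)) by apply: (proj2 gu); lia.
    by move: Ir; rewrite ri ui ImN oppr_ge0 => /(lt_le_trans h); rewrite ltxx.
  - by rewrite ri iN (proj1 gu) ReN Re1; apply: Re_ge.
apply: eqC_semipolar.
- by rewrite u1 r1.
- by apply/eqP; rewrite eq_le Rle Rge.
- by apply: mulr_ge0 => //; exact: ltW.
Qed.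
Lemma max_seq (T : eqType) (P : pred T) (f : T -> algC) (hf : forall i, f i \is Num.real) (s : seq T) :
  has P s -> exists2 i, (i \in s) && P i & forall j, j \in s -> P j -> f j <= f i.
Proof.
elim: s => // a s IH /=; case Pa: (P a) => /= Hs.
- case Hs' : (has P s).
  + have [i /andP[iS Pi] Hi] := IH Hs'.
    case/orP: (real_leVge (hf a) (hf i)) => h.
    * exists i; first by rewrite inE iS orbT Pi.
      by move=> j; rewrite inE => /orP[/eqP->|js] Pj //; apply: Hi.
    * exists a; first by rewrite inE eqxx Pa.
      move=> j; rewrite inE => /orP[/eqP->|js] Pj //.
      exact: le_trans (Hi j js Pj) h.
  + exists a; first by rewrite inE eqxx Pa.
    move=> j; rewrite inE => /orP[/eqP->|js] Pj //.
    by move/hasPn: Hs' => /(_ j js); rewrite Pj.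
- have [i /andP[iS Pi] Hi] := IH Hs.
  exists i; first by rewrite inE iS orbT Pi.
  by move=> j; rewrite inE => /orP[/eqP->|js] Pj //; [rewrite Pa in Pj | apply: Hi].
Qed.

Lemma finmax (I : finType) (P : pred I) (f : I -> algC) : (forall i, f i \is Num.real) ->
  (exists i, P i) -> exists2 i, P i & forall j, P j -> f j <= f i.
Proof.
move=> hf [i0 Pi0].
have : has P (enum I) by apply/hasP; exists i0; rewrite ?mem_enum.
case/(max_seq hf) => i /andP[_ Pi] Hi; exists i => // j Pj; by apply: Hi; rewrite ?mem_enum.
Qed.

Lemma sq1 (x : algC) : x ^+ 2 = 1 -> x = 1 \/ x = -1.
Proof. by move/eqP; rewrite sqrf_eq1 => /orP[/eqP->|/eqP->]; [left|right]. Qed.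

Lemma conjC_unit_pow (g : algC) k : g * g^* = 1 -> (g^*) ^+ k * g ^+ k = 1.
Proof. by move=> gg; rewrite -exprMn mulrC gg expr1n. Qed.

Lemma good_exists n : (1 < n)%N -> exists u, good n u.
Proof.
move=> n1; set N := (2 * n)%N.
have N0 : (0 < N)%N by rewrite /N; lia.
have [z pz] := C_prim_root_exists N0.
have zN : z ^+ N = 1 := prim_expr_order pz.
have uz : `|z| = 1 by apply: (norm_pow1 N0); left.
have zz : z * z^* = 1 := conj_unit uz.
have Imz : 'Im z != 0.
  apply/eqP => h; have [e|e] := real_unit uz h.
  - by move: (prim_order_dvd pz 1); rewrite e expr1n eqxx; move/dvdn_leq => /(_ isT); rewrite /N; lia.
  - by move: (prim_order_dvd pz 2); rewrite e sqrrN expr1n eqxx; move/dvdn_leq => /(_ isT); rewrite /N; lia.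
pose P := fun i : 'I_N => 0 < 'Im (z ^+ i).
have z0 : z != 0 by apply/eqP => z0; move: uz; rewrite z0 normr0 => /eqP; rewrite eq_sym oner_eq0.
have zc : z ^+ N.-1 = z^*.
  apply: (mulfI z0).
  by rewrite zz -exprS prednK.
have N1 : (1 < N)%N by rewrite /N; lia.
have exP : exists i, P i.
  have [hz|hz] : 0 < 'Im z \/ 'Im z < 0.
    by move: Imz; rewrite real_neqr_lt ?Creal_Im ?rpred0 // => /orP[]; [right|left].
  - by exists (Ordinal N1); rewrite /P expr1.
  - have N2 : (N.-1 < N)%N by rewrite prednK // ltnSn.
    by exists (Ordinal N2); rewrite /P /= zc Im_conj oppr_gt0.
have [i0 Pi0 Hmax] := @finmax _ P (fun i : 'I_N => 'Re (z ^+ i)) (fun i => Creal_Re _) exP.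
set g := z ^+ i0.
have gmax : forall x, x ^+ N = 1 -> 0 < 'Im x -> 'Re x <= 'Re g.
  by move=> x xN Ix; have [i xi] := prim_rootP pz xN; rewrite xi; apply: Hmax; rewrite /P -xi.
have gN : g ^+ N = 1 by rewrite /g -exprM mulnC exprM zN expr1n.
have ug : `|g| = 1 by apply: (norm_pow1 N0); left.
have Img : 0 < 'Im g := Pi0.
have gg : g * g^* = 1 := conj_unit ug.
have m1N : (-1 : algC) ^+ N = 1 by rewrite /N exprM sqrrN expr1n expr1n.
have clA : forall j, 0 < 'Im (g ^+ j.+1) -> 'Im (g ^+ j.+2) <= 0 -> g ^+ j.+2 = -1.
  move=> j h1 h2; set A := - g ^+ j.+2.
  have uA : `|A| = 1 by rewrite normrN normrX ug expr1n.
  have IA : 0 <= 'Im A by rewrite ImN oppr_ge0.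
  have AG : A * g^* = - g ^+ j.+1 by rewrite /A mulNr exprSr -mulrA gg mulr1.
  have lt : 'Re g < 'Re A by apply: crossC => //; rewrite AG ImN oppr_lt0.
  have AN : A ^+ N = 1.
    by rewrite /A exprNn m1N mul1r -exprM mulnC exprM gN expr1n.
  case: (boolP (0 < 'Im A)) => hA.
    by have := gmax _ AN hA; rewrite (lt_geF lt).
  have IA0 : 'Im A = 0.
    by move: IA; rewrite le_eqVlt (negbTE hA) orbF => /eqP<-.
  have [A1|A1] := real_unit uA IA0.
  - by apply/eqP; rewrite -eqr_oppLR -/A A1.
  - by exfalso; move: lt; rewrite A1 ReN Re1 => /(le_lt_trans (Re_ge ug)); rewrite ltxx.
have gcN : (g^*) ^+ N = 1 by rewrite -rmorphXn gN rmorph1.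
have clB : forall j, (0 < j < n)%N -> g ^+ j = -1 -> False.
  move=> j jn gj.
  have [h [hN [uh [Ih hz']]]] : exists h, h ^+ N = 1 /\ `|h| = 1 /\ 0 < 'Im h /\ h ^+ (2 * j) = z ^+ (2 * j).
    have [hz|hz] : 0 < 'Im z \/ 'Im z < 0.
      by move: Imz; rewrite real_neqr_lt ?Creal_Im ?rpred0 // => /orP[]; [right|left].
    - by exists z.
    - exists (- z); rewrite exprNn m1N mul1r zN normrN uz ImN oppr_gt0; do !split => //.
      by rewrite exprNn exprM sqrrN expr1n expr1n mul1r.
  have hk : forall k, (k <= j)%N -> 0 < 'Im (h * (g^*) ^+ k).
    elim=> [|k IH] kj; first by rewrite expr0 mulr1.
    set x := h * g^* ^+ k.
    have Ix := IH (ltnW kj).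
    have ux : `|x| = 1 by rewrite normrM normrX norm_conjC ug expr1n uh mulr1.
    rewrite exprSr mulrA -/x.
    case: (boolP (0 < 'Im (x * g^*))) => // hy; exfalso.
    have hy' : 'Im (x * g^*) <= 0 by rewrite real_leNgt ?Creal_Im ?rpred0.
    move: hy'; rewrite le_eqVlt => /orP[/eqP y0 | ylt].
    - have uy : `|x * g^*| = 1 by rewrite normrM ux norm_conjC ug mulr1.
      have hy1 : h = (x * g^*) * g ^+ k.+1.
        have -> : x * g^* = h * g^* ^+ k.+1 by rewrite /x exprSr mulrA.
        by rewrite -mulrA conjC_unit_pow ?mulr1.
      have y2 : (x * g^*) ^+ 2 = 1.
        by have [->|->] := real_unit uy y0; rewrite ?sqrrN expr1n.
      have gk : (g ^+ k.+1) ^+ (2 * j) = 1.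
        by rewrite -exprM mulnC exprM mulnC exprM gj sqrrN expr1n expr1n.
      have h2j : h ^+ (2 * j) = 1 by rewrite hy1 exprMn gk mulr1 exprM y2 expr1n.
      move: (prim_order_dvd pz (2 * j)); rewrite -hz' h2j eqxx => /dvdn_leq.
      by rewrite /N; lia.
    - have lt := crossC ux ug (ltW Ix) Img ylt.
      have xN : x ^+ N = 1 by rewrite /x exprMn hN mul1r -exprM mulnC exprM gcN expr1n.
      by have := gmax _ xN Ix; rewrite (lt_geF lt).
  have := hk j (leqnn j).
  by rewrite -rmorphXn gj rmorphN rmorph1 mulrN1 ImN oppr_gt0 => /(lt_trans Ih); rewrite ltxx.
have clC : forall j, (0 < j < n)%N -> 0 < 'Im (g ^+ j).
  elim=> [//|j IH] /andP[_ jn].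
  case: j IH jn => [|j] IH jn; first by rewrite expr1.
  have h1 : 0 < 'Im (g ^+ j.+1) by apply: IH; lia.
  case: (boolP (0 < 'Im (g ^+ j.+2))) => // hy; exfalso.
  apply: (clB j.+2); first by lia.
  by apply: clA => //; rewrite real_leNgt ?Creal_Im ?rpred0.
have [m nm] : exists m, n = m.+2 by exists n.-2; lia.
have h1 : 0 < 'Im (g ^+ m.+1) by apply: clC; lia.
have : g ^+ n = 1 \/ g ^+ n = -1 by apply: sq1; rewrite -exprM mulnC gN.
move=> gn2.
have In0 : 'Im (g ^+ n) <= 0 by case: gn2 => ->; rewrite ?ImN Im1 ?oppr0.
exists g; split => //.
by rewrite nm; apply: clA => //; rewrite -nm.
Qed.

Lemma root_pow n e : (0 < n)%N -> (0 < e)%N -> (n * e).-root (-1 : algC) ^+ e = n.-root (-1).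
Proof.
move=> n0 e0.
have ne0 : (0 < n * e)%N by rewrite muln_gt0 n0.
have gr : good (n * e) ((n * e).-root (-1 : algC)).
  case: (ltnP 1 (n * e)) => ne1.
    by have [u gu] := good_exists ne1; rewrite -(good_root ne0 gu).
  have -> : (n * e)%N = 1%N by lia.
  by rewrite root1C; split => [|j]; [rewrite expr1 | lia].
apply: good_root => //; split.
  by rewrite -exprM (mulnC e n); case: gr.
move=> j jn; rewrite -exprM; apply: (proj2 gr).
case/andP: jn => j0 jn; apply/andP; split; first by rewrite muln_gt0 e0.
by rewrite (mulnC e j) ltn_pmul2r.
Qed.



Lemma good_root_n n : (0 < n)%N -> good n (n.-root (-1 : algC)).
Proof.
move=> n0; case: (ltnP 1 n) => n1.
  by have [u gu] := good_exists n1; rewrite -(good_root n0 gu).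
have -> : n = 1%N by lia.
by rewrite root1C; split => [|j]; [rewrite expr1 | lia].
Qed.

Lemma zeta_pow n e : (0 < n)%N -> (0 < e)%N -> zeta (n * e) ^+ e = zeta n.
Proof. by move=> n0 e0; rewrite /zeta -exprM (mulnC 2 e) exprM root_pow. Qed.

Lemma wroot_pow n e : (0 < n)%N -> (0 < e)%N -> wroot (n * e) ^+ e = wroot n.
Proof. by move=> n0 e0; rewrite /wroot exprVn zeta_pow. Qed.

Lemma zeta_prim n : (0 < n)%N -> n.-primitive_root (zeta n).
Proof.
move=> n0; have := good_prim n0 (good_root_n n0).
move=> p; have := dvdn_prim_root p (dvdn_mull 2 (dvdnn n)).
by rewrite mulnK.
Qed.

Lemma dvdz_small (n : nat) (a : int) : (0 < n)%N -> - n%:Z < a -> a < n%:Z ->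
  (n%:Z %| a)%Z = (a == 0).
Proof.
move=> n0 h1 h2; apply/idP/eqP => [/dvdzP [q eq]|->]; last exact: dvdz0.
rewrite eq in h1 h2 *.
have [q0|q0] : (q <= -1 \/ 0 <= q)%R by lia.
  have : q * n%:Z <= - n%:Z by nia. lia.
have [q1|q1] : (q = 0 \/ 1 <= q)%R by lia.
  by rewrite q1 mul0r.
have : n%:Z <= q * n%:Z by nia. lia.
Qed.

Section Base.
Variable d' : nat.
Local Notation d := d'.+1.

Definition Ez (a : int) : algC := wroot d ^ a.

Lemma w0 : wroot d != 0.
Proof. by rewrite /wroot invr_eq0 (prim_root_eq0 (zeta_prim (ltn0Sn d'))). Qed.

Lemma wd : wroot d ^+ d = 1.
Proof. by rewrite /wroot exprVn (prim_expr_order (zeta_prim (ltn0Sn d'))) invr1. Qed.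

Lemma wexp1 i : (wroot d ^+ i == 1) = (d %| i)%N.
Proof. by rewrite /wroot exprVn invr_eq1 (prim_order_dvd (zeta_prim (ltn0Sn d'))). Qed.

Lemma Ez_add a b : Ez (a + b) = Ez a * Ez b.
Proof. exact: expfzDr w0. Qed.

Lemma Ez_nat (n : nat) : Ez n%:Z = wroot d ^+ n.
Proof. by []. Qed.

Lemma Ez_dvd a : (d%:Z %| a)%Z -> Ez a = 1.
Proof.
case/dvdzP => q ->; rewrite /Ez mulrC -exprz_exp.
have -> : wroot d ^ d%:Z = 1 by exact: wd.
exact: exp1rz.
Qed.

Lemma Ez_per a b : (d%:Z %| a - b)%Z -> Ez a = Ez b.
Proof. by move=> h; rewrite -(subrK b a) Ez_add Ez_dvd ?mul1r. Qed.

Lemma Ez_eq1 a : (Ez a == 1) = (d%:Z %| a)%Z.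
Proof.
have -> : Ez a = Ez (a %% d)%Z.
  by apply: Ez_per; rewrite -eqz_mod_dvd modz_mod.
have : (0 <= a %% d)%Z by apply: modz_ge0.
case E : (a %% d)%Z => [k|k] // _.
rewrite Ez_nat wexp1.
apply/idP/idP => h.
  have kd : (k < d)%N by have := ltz_pmod a (ltz_nat 0 d); rewrite E.
  have k0 : k = 0%N by move: h kd; case: (k) => // k' /dvdn_leq; lia.
  by apply/dvdz_mod0P; rewrite E k0.
by move/dvdz_mod0P: h; rewrite E => -[->].
Qed.

Lemma Ez_conj a : (Ez a)^* = Ez (- a).
Proof.
have ud : `|wroot d| = 1 by apply: (norm_pow1 (ltn0Sn d')); left; exact: wd.
have wc : (wroot d)^* = (wroot d)^-1.
  by apply: (mulfI w0); rewrite conj_unit // mulfV // w0.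
rewrite /Ez (fmorphXz (@Num.conj algC)) -exprz_inv; congr (_ ^ _); exact: wc.
Qed.


Lemma Ez_mulnat (a : int) (k : nat) : Ez (a * k%:Z) = Ez a ^+ k.
Proof. by rewrite /Ez -exprz_exp. Qed.

Lemma orth (K : nat) (a : int) : (0 < K)%N -> (K %| d)%N ->
  \sum_(k < K) Ez ((d %/ K * k)%N%:Z * a) = K%:R * ((K%:Z %| a)%Z)%:R.
Proof.
move=> K0 Kd; set e := (d %/ K)%N.
have de : d = (e * K)%N by rewrite /e divnK.
have e0 : (0 < e)%N by rewrite /e divn_gt0 // dvdn_leq.
set rho := Ez (e%:Z * a).
have Er : forall k : 'I_K, Ez ((e * k)%N%:Z * a) = rho ^+ k.
  by move=> k; rewrite -Ez_mulnat; congr Ez; rewrite PoszM; ring.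
rewrite (eq_bigr _ (fun k _ => Er k)).
have rK : rho ^+ K = 1.
  rewrite /rho -Ez_mulnat; apply: Ez_dvd; rewrite de PoszM.
  by apply/dvdzP; exists a; ring.
have r1 : (rho == 1) = (K%:Z %| a)%Z.
  rewrite /rho Ez_eq1 de PoszM mulrC (mulrC e%:Z) dvdz_mul2r //.
  by rewrite eqz_nat; lia.
case: (boolP (K%:Z %| a)%Z) => hK /=.
  have /eqP r1' : rho == 1 by rewrite r1.
  rewrite r1' (eq_bigr (fun _ => 1)) => [|k _]; last by rewrite expr1n.
  by rewrite sumr_const card_ord mulr1.
rewrite mulr0.
have : (rho - 1) * \sum_(k < K) rho ^+ k = 0 by rewrite -subrX1 rK subrr.
move/eqP; rewrite mulf_eq0 subr_eq0 r1 (negbTE hK) /=.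
by move/eqP.
Qed.

Lemma idx_lt (z : int) : (absz (z %% d)%Z < d)%N.
Proof. lia. Qed.

Definition idx (z : int) : 'I_d := Ordinal (idx_lt z).

Lemma vatE (f : 'I_d -> algC) z : vat f z = f (idx z).
Proof.
rewrite /vat insubT /=; first exact: idx_lt.
by move=> H; congr f; apply: val_inj.
Qed.

Lemma idx_mod z : (d%:Z %| (idx z)%:Z - z)%Z.
Proof.
rewrite /= -eqz_mod_dvd.
have -> : ((`|(z %% d)%Z|%N)%:Z) = (z %% d)%Z by lia.
by rewrite modz_mod.
Qed.

Lemma idx_ord (i : 'I_d) : idx i%:Z = i.
Proof. apply: val_inj => /=; by rewrite modz_small // lez_nat ltz_nat ltn_ord andbT. Qed.

Lemma vat_ord (f : 'I_d -> algC) (i : 'I_d) : vat f i%:Z = f i.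
Proof. by rewrite vatE idx_ord. Qed.

Lemma idx_per a b : (d%:Z %| a - b)%Z -> idx a = idx b.
Proof.
rewrite -eqz_mod_dvd => /eqP h; apply: val_inj => /=; by rewrite h.
Qed.

Lemma vat_per (f : 'I_d -> algC) a b : (d%:Z %| a - b)%Z -> vat f a = vat f b.
Proof. by move=> h; rewrite !vatE (idx_per h). Qed.

Lemma ord_eq_dvd (i j : 'I_d) : (d%:Z %| i%:Z - j%:Z)%Z -> i = j.
Proof.
have hi := ltn_ord i; have hj := ltn_ord j.
rewrite dvdz_small //.
- by move=> /eqP h; apply: ord_inj; lia.
- lia.
- lia.
Qed.

Lemma pershift (G : int -> algC) (c : int) :
  (forall a b, (d%:Z %| a - b)%Z -> G a = G b) ->
  \sum_(n < d) G n%:Z = \sum_(n < d) G (n%:Z + c).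
Proof.
move=> hG.
have inj : injective (fun n : 'I_d => idx (n%:Z + c)).
  move=> i j /= h; apply: ord_eq_dvd.
  have h1 := idx_mod (i%:Z + c); have h2 := idx_mod (j%:Z + c).
  rewrite h in h1.
  have := rpredB h2 h1.
  by rewrite (_ : _ - _ - _ = i%:Z - j%:Z) //; ring.
rewrite (reindex_inj inj) /=.
by apply: eq_bigr => n _; apply: hG; exact: idx_mod.
Qed.

Lemma pick (F : 'I_d -> algC) (z : int) :
  \sum_(p < d) F p * ((d%:Z %| p%:Z - z)%Z)%:R = vat F z.
Proof.
rewrite (bigD1 (idx z)) //= idx_mod mulr1 big1 ?addr0 ?vatE //.
move=> p /negP hp; case: (boolP (d%:Z %| p%:Z - z)%Z) => h; last by rewrite mulr0.
exfalso; apply: hp; apply/eqP/ord_eq_dvd.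
have := rpredB h (idx_mod z).
by rewrite (_ : _ - _ - _ = p%:Z - (idx z)%:Z) //; ring.
Qed.

Lemma dft_at (f : 'I_d -> algC) z : vat (dftv f) z = \sum_(j < d) Ez (z * j%:Z) * f j.
Proof.
rewrite vatE /dftv; apply: eq_bigr => j _; rewrite /Fmat mxE -Ez_nat; congr (_ * _).
apply: Ez_per; rewrite PoszM.
rewrite (_ : _ - _ = ((idx z)%:Z - z) * j%:Z); last by ring.
by apply: dvdz_mulr; exact: idx_mod.
Qed.

Lemma dftv_ord (f : 'I_d -> algC) (p : 'I_d) : dftv f p = \sum_(j < d) Ez (p%:Z * j%:Z) * f j.
Proof. by rewrite -dft_at vat_ord. Qed.

Lemma inv_dft (f : 'I_d -> algC) z :
  vat f z = d%:R^-1 * \sum_(p < d) Ez (- (p%:Z * z)) * dftv f p.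
Proof.
have -> : \sum_(p < d) Ez (- (p%:Z * z)) * dftv f p =
          \sum_(j < d) f j * \sum_(p < d) Ez ((d %/ d * p)%N%:Z * (j%:Z - z)).
  rewrite (eq_bigr (fun p : 'I_d => \sum_(j < d) Ez (- (p%:Z * z)) * (Ez (p%:Z * j%:Z) * f j)));
    last by move=> p _; rewrite dftv_ord mulr_sumr.
  rewrite exchange_big /=; apply: eq_bigr => j _; rewrite mulr_sumr; apply: eq_bigr => p _.
  rewrite divnn /= mul1n mulrA -Ez_add mulrC; congr (_ * _); congr Ez; ring.
rewrite (eq_bigr (fun j : 'I_d => d%:R * (f j * ((d%:Z %| j%:Z - z)%Z)%:R))); last first.
  by move=> j _; rewrite orth // mulrCA.
by rewrite -mulr_sumr pick mulrA mulVf ?mul1r // pnatr_eq0.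
Qed.

End Base.


Section Core.
Variable d' : nat.
Local Notation d := d'.+1.
Local Notation Ez := (Ez d').

Lemma sum4 (F : 'I_d -> 'I_d -> 'I_d -> 'I_d -> algC) :
  \sum_(u : 'I_d * 'I_d) \sum_(v : 'I_d * 'I_d) F u.1 u.2 v.1 v.2 =
  \sum_(p < d) \sum_(p' < d) \sum_(j < d) \sum_(j' < d) F p j p' j'.
Proof.
rewrite -(pair_bigA _ (fun p j => \sum_(v : 'I_d * 'I_d) F p j v.1 v.2)) /=.
apply: eq_bigr => p _.
rewrite (eq_bigr (fun j => \sum_(p' < d) \sum_(j' < d) F p j p' j')); last first.
  by move=> j _; rewrite -(pair_bigA _ (fun p' j' => F p j p' j')).
by rewrite exchange_big.
Qed.

Definition Sv (x m : 'I_d -> algC) (k' l' : nat) :=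
  \sum_(n < d) x n * vat m (n%:Z - l'%:Z) * wroot d ^+ (n * k').

Definition aexp (k' l' : nat) (u : 'I_d * 'I_d) : int :=
  (u.2%:Z + l'%:Z) * (k'%:Z - u.1%:Z).

Lemma S_expand x m k' l' : Sv x m k' l' =
  d%:R^-1 * \sum_(u : 'I_d * 'I_d) dftv x u.1 * m u.2 * Ez (aexp k' l' u).
Proof.
pose G := fun z : int => vat x z * vat m (z - l'%:Z) * Ez (z * k'%:Z).
have -> : Sv x m k' l' = \sum_(n < d) G n%:Z.
  by apply: eq_bigr => n _; rewrite /G vat_ord -Ez_nat PoszM.
rewrite (pershift l'%:Z) /G; last first.
  move=> a b h; rewrite (vat_per x h) (vat_per m (b := b - l'%:Z)); last first.
    by rewrite (_ : _ - _ = a - b) //; ring.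
  congr (_ * _); apply: Ez_per; rewrite -mulrBl; exact: dvdz_mulr.
rewrite /aexp -(pair_bigA _ (fun (p n : 'I_d) => dftv x p * m n * Ez ((n%:Z + l'%:Z) * (k'%:Z - p%:Z)))) /=.
rewrite exchange_big mulr_sumr /=; apply: eq_bigr => n _.
rewrite (_ : n%:Z + l'%:Z - l'%:Z = n%:Z); last by ring.
rewrite vat_ord inv_dft -!mulrA; congr (_ * _).
rewrite mulr_suml; apply: eq_bigr => p _.
rewrite (_ : Ez ((n%:Z + l'%:Z) * (k'%:Z - p%:Z)) = Ez (- (p%:Z * (n%:Z + l'%:Z))) * Ez ((n%:Z + l'%:Z) * k'%:Z)).
  by ring.
by rewrite -Ez_add; congr Ez; ring.
Qed.

Lemma normS x m k' l' : `|Sv x m k' l'| ^+ 2 = d%:R^-1 ^+ 2 *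
  \sum_(u : 'I_d * 'I_d) \sum_(v : 'I_d * 'I_d)
     (dftv x u.1 * m u.2 * ((dftv x v.1)^* * (m v.2)^*)) * Ez (aexp k' l' u - aexp k' l' v).
Proof.
rewrite normCK S_expand rmorphM rmorph_sum fmorphV rmorph_nat mulrACA -expr2.
congr (_ * _); rewrite mulr_suml; apply: eq_bigr => u _; rewrite mulr_sumr.
apply: eq_bigr => v _; rewrite !rmorphM /= Ez_conj.
rewrite (_ : Ez (aexp k' l' u - aexp k' l' v) = Ez (aexp k' l' u) * Ez (- aexp k' l' v)).
  by ring.
by rewrite -Ez_add.
Qed.

End Core.


Lemma exch22 (I1 I2 J1 J2 : finType) (F : I1 -> I2 -> J1 -> J2 -> algC) :
  \sum_i1 \sum_i2 \sum_j1 \sum_j2 F i1 i2 j1 j2 = \sum_j1 \sum_j2 \sum_i1 \sum_i2 F i1 i2 j1 j2.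
Proof.
rewrite (eq_bigr (fun i1 => \sum_j1 \sum_i2 \sum_j2 F i1 i2 j1 j2)); last first.
  by move=> i1 _; rewrite exchange_big.
rewrite exchange_big; apply: eq_bigr => j1 _.
rewrite (eq_bigr (fun i1 => \sum_j2 \sum_i2 F i1 i2 j1 j2)); last first.
  by move=> i1 _; rewrite exchange_big.
by rewrite exchange_big.
Qed.

Lemma sum2_mull (I J : finType) (c : algC) (F : I -> J -> algC) :
  \sum_i \sum_j c * F i j = c * \sum_i \sum_j F i j.
Proof. rewrite mulr_sumr; apply: eq_bigr => i _; by rewrite mulr_sumr. Qed.

Section Core2.
Variable d' : nat.
Local Notation d := d'.+1.
Local Notation Ez := (Ez d').

Lemma wroot_div L : (0 < L)%N -> (L %| d)%N -> wroot d ^+ (d %/ L) = wroot L.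
Proof.
move=> L0 hL; have e0 : (0 < d %/ L)%N by rewrite divn_gt0 // dvdn_leq.
by rewrite -(wroot_pow L0 e0) mulnC divnK.
Qed.

Lemma idx_val (a : nat) : (a < d)%N -> (idx d' a%:Z : nat) = a.
Proof. by move=> h; rewrite /= modz_small // lez_nat ltz_nat h. Qed.

Lemma tilde_entry (A : 'M[algC]_d) K L (al : 'I_L) (om : 'I_K) :
  (0 < K)%N -> (0 < L)%N -> (K %| d)%N -> (L %| d)%N ->
  tildemx K L A al om = \sum_(k < K) \sum_(l < L)
     Ez ((d %/ L * (al * l))%N%:Z) * A (idx d' (k * (d %/ K))%N%:Z) (idx d' (l * (d %/ L))%N%:Z) *
     Ez ((d %/ K * (om * k))%N%:Z).
Proof.
move=> K0 L0 hK hL.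
rewrite /tildemx mxE; apply: eq_bigr => k _.
rewrite !mxE mulr_suml; apply: eq_bigr => l _.
by rewrite !mxE /mat_at !vatE Ez_nat Ez_nat !exprM wroot_div // wroot_div.
Qed.

Lemma inner (K L al om : nat) (u v : 'I_d * 'I_d) :
  (0 < K)%N -> (0 < L)%N -> (K %| d)%N -> (L %| d)%N ->
  \sum_(k < K) \sum_(l < L) Ez ((d %/ L * (al * l))%N%:Z) *
     Ez (aexp (k * (d %/ K))%N (l * (d %/ L))%N u - aexp (k * (d %/ K))%N (l * (d %/ L))%N v) *
     Ez ((d %/ K * (om * k))%N%:Z)
  = (K%:R * ((K%:Z %| om%:Z + u.2%:Z - v.2%:Z)%Z)%:R) *
    ((L%:R * ((L%:Z %| al%:Z - u.1%:Z + v.1%:Z)%Z)%:R) * Ez (- (u.1%:Z * u.2%:Z) + v.1%:Z * v.2%:Z)).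
Proof.
move=> K0 L0 hK hL.
rewrite -(@orth d' K _ K0 hK) -(@orth d' L _ L0 hL) mulr_suml; apply: eq_bigr => k _.
rewrite mulr_suml mulr_sumr; apply: eq_bigr => l _.
rewrite -!Ez_add; congr Ez; rewrite /aexp !PoszM; ring.
Qed.

Lemma kd_lt K (k : 'I_K) : (K %| d)%N -> (k * (d %/ K) < d)%N.
Proof.
move=> hK; have K0 : (0 < K)%N by case: K k hK => [[]|].
rewrite -[X in (_ < X)%N](divnK hK) [X in (_ < X)%N]mulnC ltn_pmul2r ?ltn_ord //.
by rewrite divn_gt0 // dvdn_leq.
Qed.

Lemma T_eq (x m : 'I_d -> algC) K L (al : 'I_L) (om : 'I_K) :
  (0 < K)%N -> (0 < L)%N -> (K %| d)%N -> (L %| d)%N ->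
  tildemx K L (Ymat x m 0) al om = d%:R^-1 ^+ 2 *
  \sum_(u : 'I_d * 'I_d) \sum_(v : 'I_d * 'I_d)
     (dftv x u.1 * m u.2 * ((dftv x v.1)^* * (m v.2)^*)) *
     ((K%:R * ((K%:Z %| om%:Z + u.2%:Z - v.2%:Z)%Z)%:R) *
      ((L%:R * ((L%:Z %| al%:Z - u.1%:Z + v.1%:Z)%Z)%:R) * Ez (- (u.1%:Z * u.2%:Z) + v.1%:Z * v.2%:Z))).
Proof.
move=> K0 L0 hK hL.
rewrite tilde_entry //.
rewrite (eq_bigr (fun k : 'I_K => \sum_(l < L) d%:R^-1 ^+ 2 *
   \sum_(u : 'I_d * 'I_d) \sum_(v : 'I_d * 'I_d)
     (dftv x u.1 * m u.2 * ((dftv x v.1)^* * (m v.2)^*)) *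
     (Ez ((d %/ L * (al * l))%N%:Z) *
     Ez (aexp (k * (d %/ K))%N (l * (d %/ L))%N u - aexp (k * (d %/ K))%N (l * (d %/ L))%N v) *
     Ez ((d %/ K * (om * k))%N%:Z)))); last first.
  move=> k _; apply: eq_bigr => l _.
  rewrite !mxE addr0 idx_val ?kd_lt // idx_val ?kd_lt // -/(Sv x m _ _) normS.
  rewrite (_ : forall a b c S : algC, a * (c * S) * b = c * (a * b * S)); last by move=> *; ring.
  congr (_ * _).
  rewrite mulr_sumr; apply: eq_bigr => u _; rewrite mulr_sumr; apply: eq_bigr => v _.
  ring.
rewrite sum2_mull; congr (_ * _).
rewrite exch22; apply: eq_bigr => u _; apply: eq_bigr => v _.
by rewrite sum2_mull inner.
Qed.

End Core2.


Section Core3.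
Variable d' : nat.
Local Notation d := d'.+1.
Local Notation Ez := (Ez d').

Lemma vat_conj (f : 'I_d -> algC) z : vat (conjv f) z = (vat f z)^*.
Proof. by rewrite !vatE. Qed.

Lemma X_form (xh : 'I_d -> algC) (sx t : int) :
  vat (dftv (hadamard xh (shiftv sx (conjv xh)))) t =
  \sum_(p < d) \sum_(p' < d) Ez (t * p%:Z) * xh p * (xh p')^* * ((d%:Z %| p'%:Z - (p%:Z + sx))%Z)%:R.
Proof.
rewrite dft_at; apply: eq_bigr => p _.
rewrite /hadamard /shiftv -pick mulr_sumr mulr_sumr; apply: eq_bigr => p' _.
rewrite /conjv; ring.
Qed.

Lemma M_form (m : 'I_d -> algC) (sm t : int) :
  vat (dftv (hadamard (dftv m) (shiftv sm (conjv (dftv m))))) t =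
  d%:R * \sum_(j < d) \sum_(j' < d) m j * (m j')^* * Ez (- (sm * j'%:Z)) * ((d%:Z %| t + j%:Z - j'%:Z)%Z)%:R.
Proof.
pose G (q j j' : 'I_d) := m j * (m j')^* * Ez (- (sm * j'%:Z)) * Ez ((d %/ d * q)%N%:Z * (t + j%:Z - j'%:Z)).
transitivity (\sum_(q < d) \sum_(j < d) \sum_(j' < d) G q j j').
  rewrite dft_at; apply: eq_bigr => q _.
  rewrite /hadamard /shiftv vat_conj dft_at dftv_ord rmorph_sum mulr_suml mulr_sumr.
  apply: eq_bigr => j _; rewrite mulr_sumr mulr_sumr; apply: eq_bigr => j' _.
  rewrite rmorphM /= Ez_conj /G.
  have -> : Ez ((d %/ d * q)%N%:Z * (t + j%:Z - j'%:Z)) =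
    Ez (t * q%:Z) * Ez (q%:Z * j%:Z) * Ez (- ((q%:Z + sm) * j'%:Z)) * Ez (sm * j'%:Z).
    by rewrite -!Ez_add divnn /= mul1n; congr Ez; ring.
  have : Ez (- (sm * j'%:Z)) * Ez (sm * j'%:Z) = 1 by rewrite -Ez_add addNr.
  move=> h; rewrite -[LHS]mulr1 -h; ring.
rewrite exchange_big mulr_sumr; apply: eq_bigr => j _.
rewrite exchange_big mulr_sumr; apply: eq_bigr => j' _.
rewrite /G -mulr_sumr (@orth d' d _ (ltn0Sn _) (dvdnn _)); ring.
Qed.

End Core3.


Section Core4.
Variable d' : nat.
Local Notation d := d'.+1.
Local Notation Ez := (Ez d').

Lemma core (x m : 'I_d -> algC) (K L gamma delta : nat) (al : 'I_L) (om : 'I_K) (sm t : int) :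
  (0 < K)%N -> (0 < L)%N -> (K %| d)%N -> (L %| d)%N ->
  supp_in (dftv x) gamma -> supp_in m delta ->
  (forall p p' : nat, (p < gamma)%N -> (p' < gamma)%N ->
     (L%:Z %| al%:Z - p%:Z + p'%:Z)%Z = (p'%:Z == p%:Z - sm) /\
     (d%:Z %| p'%:Z - (p%:Z + - sm))%Z = (p'%:Z == p%:Z - sm)) ->
  (forall j j' : nat, (j < delta)%N -> (j' < delta)%N ->
     (K%:Z %| om%:Z + j%:Z - j'%:Z)%Z = (j'%:Z == j%:Z + t) /\
     (d%:Z %| t + j%:Z - j'%:Z)%Z = (j'%:Z == j%:Z + t)) ->
  tildemx K L (Ymat x m 0) al om =
   (K * L)%:R / (d%:R ^+ 3) * vat (dftv (hadamard (dftv x) (shiftv (- sm) (conjv (dftv x))))) t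
      * vat (dftv (hadamard (dftv m) (shiftv sm (conjv (dftv m))))) t.
Proof.
move=> K0 L0 hK hL hx hm hP hJ.
rewrite T_eq // X_form M_form.
rewrite (_ : forall a b c e : algC, a * b * (c * e) = (a * c) * (b * e)); last by move=> *; ring.
rewrite mulr_suml.
rewrite (eq_bigr (fun p : 'I_d => \sum_(p' < d) \sum_(j < d) \sum_(j' < d)
   (Ez (t * p%:Z) * dftv x p * (dftv x p')^* * ((d%:Z %| p'%:Z - (p%:Z + - sm))%Z)%:R) *
   (m j * (m j')^* * Ez (- (sm * j'%:Z)) * ((d%:Z %| t + j%:Z - j'%:Z)%Z)%:R))); last first.
  move=> p _; rewrite mulr_suml; apply: eq_bigr => p' _; rewrite mulr_sumr; apply: eq_bigr => j _.
  by rewrite mulr_sumr.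
rewrite -(sum4 (fun p j p' j' => (Ez (t * p%:Z) * dftv x p * (dftv x p')^* * ((d%:Z %| p'%:Z - (p%:Z + - sm))%Z)%:R) *
   (m j * (m j')^* * Ez (- (sm * j'%:Z)) * ((d%:Z %| t + j%:Z - j'%:Z)%Z)%:R))).
rewrite -!sum2_mull; apply: eq_bigr => [[p j]] _; apply: eq_bigr => [[p' j']] _ /=.
have nz : forall (n : 'I_d) (f : 'I_d -> algC) g, supp_in f g -> f n != 0 -> (n < g)%N.
  by move=> n f g hf hn; rewrite ltnNge; apply/negP => /hf /eqP; rewrite (negbTE hn).
case: (eqVneq (dftv x p) 0) => [->|hp]; first by rewrite !(mul0r, mulr0).
case: (eqVneq (dftv x p') 0) => [->|hp']; first by rewrite rmorph0 !(mul0r, mulr0).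
case: (eqVneq (m j) 0) => [->|hj]; first by rewrite !(mul0r, mulr0).
case: (eqVneq (m j') 0) => [->|hj']; first by rewrite rmorph0 !(mul0r, mulr0).
have [e1 e2] := hP p p' (nz _ _ _ hx hp) (nz _ _ _ hx hp').
have [f1 f2] := hJ j j' (nz _ _ _ hm hj) (nz _ _ _ hm hj').
rewrite e1 e2 f1 f2.
case: eqP => E1; last by rewrite !(mul0r, mulr0).
case: eqP => E2; last by rewrite !(mul0r, mulr0).
have -> : Ez (- (p%:Z * j%:Z) + p'%:Z * j'%:Z) = Ez (t * p%:Z) * Ez (- (sm * j'%:Z)).
  by rewrite -Ez_add; congr Ez; rewrite E1 E2; ring.
have dn : d%:R != 0 :> algC by rewrite pnatr_eq0.
rewrite natrM; field.
by rewrite addrC natr1 pnatr_eq0.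
Qed.

End Core4.


Lemma dvd_sm (n : nat) (a : int) (P : bool) : (0 < n)%N -> - n%:Z < a -> a < n%:Z ->
  (a == 0) = P -> (n%:Z %| a)%Z = P.
Proof. by move=> n0 h1 h2 <-; apply: dvdz_small. Qed.

Lemma dvd_sm2 (n : nat) (a : int) (P : bool) : (0 < n)%N -> 0 < a -> a < 2 * n%:Z ->
  (a - n%:Z == 0) = P -> (n%:Z %| a)%Z = P.
Proof.
move=> n0 h1 h2 <-.
have -> : (n%:Z %| a)%Z = (n%:Z %| a - n%:Z)%Z.
  by apply/idP/idP => h; [apply: rpredB | rewrite -(subrK n%:Z a); apply: rpredD].
by apply: dvdz_small => //; lia.
Qed.

Lemma sub_add d K L (A B : 'M[algC]_d) : subsample K L (A + B) = subsample K L A + subsample K L B.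
Proof.
apply/matrixP => k l; rewrite !mxE /mat_at /vat.
case: insubP => [i _ _|_]; last by rewrite addr0.
by case: insubP => [j _ _|_]; rewrite ?mxE ?addr0.
Qed.

Lemma tilde_add d K L (x m : 'I_d -> algC) (N : 'M[algC]_d) :
  tildemx K L (Ymat x m N) = tildemx K L (Ymat x m 0) + tildemx K L N.
Proof.
have -> : Ymat x m N = Ymat x m 0 + N by apply/matrixP => i j; rewrite !mxE addr0.
by rewrite /tildemx sub_add linearD /= mulmxDr mulmxDl.
Qed.

Lemma tilde0 (A : 'M[algC]_0) K L : tildemx K L A = 0.
Proof.
rewrite /tildemx; have -> : subsample K L A = 0.
  by apply/matrixP => k l; rewrite !mxE /mat_at /vat insubF.
by rewrite trmx0 mulmx0 mul0mx.
Qed.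

Unset Implicit Arguments.
Theorem mainTheorem5 (d : nat) (x m : 'I_d -> algC) (N : 'M[algC]_d)
  (gamma delta K L kappa xi : nat)
  (hx : supp_in (dftv x) gamma) (hm : supp_in m delta)
  (hN : forall k l, N k l \is Num.real)
  (hK : (K %| d)%N) (hL : (L %| d)%N)
  (hKk : K = (delta - 1 + kappa)%N) (hk1 : (2 <= kappa)%N) (hk2 : (kappa <= delta)%N)
  (hLx : L = (gamma - 1 + xi)%N) (hx1 : (1 <= xi)%N) (hx2 : (xi <= gamma)%N) :
  let xh := dftv x in
  let mh := dftv m in
  let Yt := tildemx K L (Ymat x m N) in
  let Nt := tildemx K L N in
  let c : algC := (K * L)%:R / (d%:R ^+ 3) in
  forall (alpha : 'I_L) (omega : 'I_K),
  [/\ ((alpha <= xi - 1)%N -> (omega <= kappa - 1)%N ->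
        Yt alpha omega =
          c * vat (dftv (hadamard xh (shiftv (- alpha%:Z) (conjv xh)))) omega%:Z
            * vat (dftv (hadamard mh (shiftv alpha%:Z (conjv mh)))) omega%:Z
          + Nt alpha omega),
      ((alpha <= xi - 1)%N -> (delta <= omega <= K - 1)%N ->
        Yt alpha omega =
          c * vat (dftv (hadamard xh (shiftv (- alpha%:Z) (conjv xh)))) (omega%:Z - K%:Z)
            * vat (dftv (hadamard mh (shiftv alpha%:Z (conjv mh)))) (omega%:Z - K%:Z)
          + Nt alpha omega),
      ((gamma <= alpha <= L - 1)%N -> (omega <= kappa - 1)%N ->
        Yt alpha omega =
          c * vat (dftv (hadamard xh (shiftv (L%:Z - alpha%:Z) (conjv xh)))) omega%:Z
            * vat (dftv (hadamard mh (shiftv (alpha%:Z - L%:Z) (conjv mh)))) omega%:Z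
          + Nt alpha omega)
    & ((gamma <= alpha <= L - 1)%N -> (delta <= omega <= K - 1)%N ->
        Yt alpha omega =
          c * vat (dftv (hadamard xh (shiftv (L%:Z - alpha%:Z) (conjv xh)))) (omega%:Z - K%:Z)
            * vat (dftv (hadamard mh (shiftv (alpha%:Z - L%:Z) (conjv mh)))) (omega%:Z - K%:Z)
          + Nt alpha omega)].
Proof.
move=> xh mh Yt Nt c alpha omega.
rewrite /Yt /Nt /c /xh /mh {Yt Nt c xh mh}.
case: d x m N hx hm hN hK hL alpha omega => [|d'] x m N hx hm hN hK hL alpha omega.
  rewrite tilde0 tilde0 !mxE expr0n /= invr0 !mulr0 !mul0r addr0.
  by split.
have K0 : (0 < K)%N by lia.
have L0 : (0 < L)%N by lia.
have Kd : (K <= d'.+1)%N := dvdn_leq (ltn0Sn _) hK.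
have Ld : (L <= d'.+1)%N := dvdn_leq (ltn0Sn _) hL.
have ao := ltn_ord alpha; have oo := ltn_ord omega.
rewrite tilde_add mxE.
split => [ha ho | ha /andP[ho1 ho2] | /andP[ha1 ha2] ho | /andP[ha1 ha2] /andP[ho1 ho2]]; congr (_ + _).
- apply: (core (gamma := gamma) (delta := delta) (sm := alpha%:Z) K0 L0 hK hL hx hm).
  + move=> p p' hp hp'; split.
    * by apply: dvd_sm; [lia|lia|lia|apply/eqP/eqP; lia].
    * by apply: dvd_sm; [lia|lia|lia|apply/eqP/eqP; lia].
  + move=> j j' hj hj'; split.
    * by apply: dvd_sm; [lia|lia|lia|apply/eqP/eqP; lia].
    * by apply: dvd_sm; [lia|lia|lia|apply/eqP/eqP; lia].
- apply: (core (gamma := gamma) (delta := delta) (sm := alpha%:Z) K0 L0 hK hL hx hm).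
  + move=> p p' hp hp'; split.
    * by apply: dvd_sm; [lia|lia|lia|apply/eqP/eqP; lia].
    * by apply: dvd_sm; [lia|lia|lia|apply/eqP/eqP; lia].
  + move=> j j' hj hj'; split.
    * by apply: dvd_sm2; [lia|lia|lia|apply/eqP/eqP; lia].
    * by apply: dvd_sm; [lia|lia|lia|apply/eqP/eqP; lia].
- rewrite -(opprB alpha%:Z L%:Z); apply: (core (gamma := gamma) (delta := delta) (sm := alpha%:Z - L%:Z) K0 L0 hK hL hx hm).
  + move=> p p' hp hp'; split.
    * by apply: dvd_sm2; [lia|lia|lia|apply/eqP/eqP; lia].
    * by apply: dvd_sm; [lia|lia|lia|apply/eqP/eqP; lia].
  + move=> j j' hj hj'; split.
    * by apply: dvd_sm; [lia|lia|lia|apply/eqP/eqP; lia].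
    * by apply: dvd_sm; [lia|lia|lia|apply/eqP/eqP; lia].
- rewrite -(opprB alpha%:Z L%:Z); apply: (core (gamma := gamma) (delta := delta) (sm := alpha%:Z - L%:Z) K0 L0 hK hL hx hm).
  + move=> p p' hp hp'; split.
    * by apply: dvd_sm2; [lia|lia|lia|apply/eqP/eqP; lia].
    * by apply: dvd_sm; [lia|lia|lia|apply/eqP/eqP; lia].
  + move=> j j' hj hj'; split.
    * by apply: dvd_sm2; [lia|lia|lia|apply/eqP/eqP; lia].
    * by apply: dvd_sm; [lia|lia|lia|apply/eqP/eqP; lia].
Qed.
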